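(* Let $n,t\ge 0$, $q\ge 2$, $b\ge 1$. For every $\boldsymbol{x}\in\Sigma_q^n$, \[ |\mathcal{I}_{t,b}(\boldsymbol{x})| = q^{t(b-1)}\sum_{i=0}^{t}\binom{n+t}{i}(q-1)^i . \] In particular, $I_{q,b}(n,t)=q^{t(b-1)}\sum_{i=0}^{t}\binom{n+t}{i}(q-1)^i$.
   Context: $\Sigma_q=\{0,1,\ldots,q-1\}$ and $\Sigma_q^n$ is the set of length-$n$ sequences over $\Sigma_q$ ($\Sigma_q^0$ contains only the empty sequence). A $b$-burst-insertion at position $i\in[1,n+1]$ transforms $x_1\cdots x_n$ into $x_1\cdots x_{i-1}y_1\cdots y_b x_i\cdots x_n$ for an arbitrary $y_1\cdots y_b\in\Sigma_q^b$. $\mathcal{I}_{t,b}(\boldsymbol{x})$ is the set of all sequences of length $n+tb$ obtainable from $\boldsymbol{x}$ by $t$ successive $b$-burst-insertions ($\mathcal{I}_{0,b}(\boldsymbol{x})=\{\boldsymbol{x}\}$). $I_{q,b}(n,t)=\max\{|\mathcal{I}_{t,b}(\boldsymbol{x})|:\boldsymbol{x}\in\Sigma_q^n\}$. Convention: $\binom{m}{i}=0$ if $m<i$. *)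

(* Defs.v *)
From mathcomp Require Import all_boot.
Set Implicit Arguments. Unset Strict Implicit. Unset Printing Implicit Defensive.

(* b-burst insertion: insert y (of length b) before the (i+1)-th symbol of x,
   i in [0, size x]  (paper's position i+1 in [1, n+1]). *)
Definition burst_ins (q : nat) (i : nat) (y x : seq 'I_q) : seq 'I_q :=
  take i x ++ y ++ drop i x.

Definition one_burst (q b : nat) (w : seq 'I_q) : seq (seq 'I_q) :=
  [seq burst_ins i (tval y) w | i <- iota 0 (size w).+1, y <- enum {: b.-tuple 'I_q}].

Fixpoint t_burst_list (q b t : nat) (x : seq 'I_q) : seq (seq 'I_q) :=
  match t with
  | 0 => [:: x]
  | t'.+1 => flatten [seq one_burst b w | w <- t_burst_list b t' x]
  end.

Definition Iball (q b t : nat) (x : seq 'I_q) : seq (seq 'I_q) :=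
  undup (t_burst_list b t x).

Definition Imax (q b n t : nat) : nat :=
  \max_(x : n.-tuple 'I_q) size (Iball b t (tval x)).

(* Main.v *)
Require Import Defs.
From mathcomp Require Import all_boot.

From mathcomp Require Import all_boot.
From mathcomp Require Import zify.
Set Implicit Arguments. Unset Strict Implicit. Unset Printing Implicit Defensive.

Section S.
Variables (q b : nat).
Hypothesis b1 : 0 < b.

Inductive E : nat -> seq 'I_q -> seq 'I_q -> Prop :=
| E_nil : E 0 [::] [::]
| E_cons a t x y : E t x y -> E t (a :: x) (a :: y)
| E_gap t x y w : size w = b -> E t x y -> E t.+1 x (w ++ y).

Lemma ins_E t x z i w : E t x z -> i <= size z -> size w = b ->
  E t.+1 x (take i z ++ w ++ drop i z).
Proof.
move=> H; elim: H i => {t x z}.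
- move=> i; rewrite leqn0 => /eqP -> /= sw; exact: (E_gap sw E_nil).
- move=> a t x y Hy IH [|i] /= Hi sw.
  + exact: (E_gap sw (E_cons a Hy)).
  + apply: E_cons; exact: IH.
- move=> t x y u su Hy IH i Hi sw.
  case: (ltnP i b) => ib.
  + rewrite take_cat drop_cat su ib.
    set v := take i u ++ w ++ drop i u.
    have sv : size v = b + b by rewrite /v !size_cat size_take size_drop su ib; lia.
    have -> : take i u ++ w ++ drop i u ++ y = take b v ++ (drop b v ++ y)
      by rewrite [in RHS]catA cat_take_drop /v -!catA.
    apply: E_gap; first by rewrite size_takel // sv leq_addr.
    apply: E_gap => //; rewrite size_drop sv; lia.
  + rewrite take_cat drop_cat su ltnNge ib /= -catA.
    apply: E_gap => //; apply: IH => //.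
    move: Hi; rewrite size_cat su; lia.
Qed.

Lemma peel t a x z v : E t (a :: x) z -> size v + 1 = b -> E t.+1 x (v ++ z).
Proof.
move=> H; move Hax: (a :: x) H => ax H.
elim: H Hax v => {t ax z}.
- by [].
- move=> c t x' y Hy IH [? ?] v sv; subst.
  rewrite -cat1s catA; apply: E_gap => //; by rewrite size_cat.
- move=> t x' y w sw Hy IH Hx v sv.
  have := @ins_E _ _ _ (size v) w (IH Hx v sv).
  rewrite take_size_cat // drop_size_cat //; apply => //.
  by rewrite size_cat leq_addr.
Qed.


Definition allw m : seq (seq 'I_q) := [seq tval w | w <- enum {: m.-tuple 'I_q}].
Definition heads (a : 'I_q) : seq (seq 'I_q) :=
  [seq c :: tval w | c <- enum (predC1 a), w <- enum {: (b.-1).-tuple 'I_q}].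

Fixpoint L (x : seq 'I_q) : nat -> seq (seq 'I_q) :=
  match x with
  | [::] => fun t => allw (t * b)
  | a :: x' => fix G t := match t with
               | 0 => map (cons a) (L x' 0)
               | t'.+1 => map (cons a) (L x' t'.+1) ++ [seq w ++ y | w <- heads a, y <- G t']
               end
  end.

Lemma L_cons a x t : L (a :: x) t = map (cons a) (L x t) ++
  (if t is t'.+1 then [seq w ++ y | w <- heads a, y <- L (a :: x) t'] else [::]).
Proof. by case: t => [|t] /=; rewrite ?cats0. Qed.

Lemma mem_allw m y : (y \in allw m) = (size y == m).
Proof.
apply/mapP/eqP => [[w _ ->]|<-]; first exact: size_tuple.
by exists (in_tuple y); rewrite ?mem_enum.
Qed.

Lemma mem_heads a w : (w \in heads a) = (size w == b) && (head a w != a).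
Proof.
apply/allpairsP/andP => [[[c w'] /= [cs _ ->]]|].
  by rewrite mem_enum in cs; rewrite /= size_tuple prednK.
case: w => [|c w'] /=; first by move=> [/eqP sb]; move: b1; rewrite -sb.
move=> [/eqP sw ca].
have sw' : size w' == b.-1 by rewrite -sw.
exists (c, Tuple sw'); by rewrite /= !mem_enum.
Qed.

Lemma E_inv t a x y : E t (a :: x) y ->
  (exists y', y = a :: y' /\ E t x y') \/
  (exists t' w y', [/\ t = t'.+1, y = w ++ y', size w = b, head a w != a & E t' (a :: x) y']).
Proof.
move=> H; move Hax: (a :: x) H => ax H.
case: H Hax => //.
- move=> c t' x' y' Hy [? ?]; subst; left; by exists y'.
- move=> t' x' y' w sw Hy Hx; subst.
  case: (eqVneq (head a w) a) => hw.
    left; case: w sw hw => [|c w'] /=; first by move=> sb; move: b1; rewrite -sb.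
    move=> sw ->; exists (w' ++ y'); split => //.
    apply: peel Hy _; by rewrite addn1.
  right; by exists t', w, y'.
Qed.

Lemma mem_L x t y : (y \in L x t) <-> E t x y.
Proof.
elim: x t y => [|a x IHx] t y.
  rewrite /= mem_allw; split.
    move/eqP; elim: t y => [|t IHt] y /=.
      by move/size0nil->; exact: E_nil.
    move=> sy; rewrite -(cat_take_drop b y); apply: E_gap.
      by rewrite size_takel // sy mulSn leq_addr.
    by apply: IHt; rewrite size_drop sy mulSn addKn.
  move Hx: [::] => x0 H; elim: H Hx => //= t' x' y' w sw _ IH Hx.
  by rewrite size_cat sw (eqP (IH Hx)) mulSn.
elim: t y => [|t IHt] y; rewrite L_cons; split.
- rewrite cats0 => /mapP [y' Hy' ->]; apply: E_cons; exact/IHx.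
- case/E_inv => [[y' [-> Hy]]|[t' [w [y' [] //]]]].
  by rewrite cats0; apply/map_f/IHx.
- rewrite mem_cat => /orP [/mapP [y' Hy' ->]|].
    apply: E_cons; exact/IHx.
  case/allpairsP => [[w y'] /= [wh yL ->]].
  move: wh; rewrite mem_heads => /andP [/eqP sw _].
  apply: E_gap => //; exact/IHt.
- case/E_inv => [[y' [-> Hy]]|[t' [w [y' [[<-] -> sw hw Hy]]]]].
    by rewrite mem_cat; apply/orP; left; apply/map_f/IHx.
  rewrite mem_cat; apply/orP; right; apply/allpairsP; exists (w, y'); split => //=.
    by rewrite mem_heads sw eqxx.
  exact/IHt.
Qed.

Lemma E0 x : E 0 x x.
Proof. elim: x => [|a x IH]; [exact: E_nil | exact: E_cons]. Qed.

Lemma mem_tbl_step t (x y : seq 'I_q) : (y \in t_burst_list b t.+1 x) =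
  has (fun w => y \in one_burst b w) (t_burst_list b t x).
Proof.
apply/flattenP/hasP => [[s /mapP [w Hw ->] Hy]|[w Hw Hy]]; first by exists w.
by exists (one_burst b w) => //; apply: map_f.
Qed.

Lemma cons_tbl (a : 'I_q) t (x y : seq 'I_q) : y \in t_burst_list b t x -> a :: y \in t_burst_list b t (a :: x).
Proof.
elim: t y => [|t IHt] y; first by rewrite !mem_seq1 => /eqP ->.
rewrite !mem_tbl_step => /hasP [w Hw /allpairsP [[i y0] [Hi _ ->]]].
apply/hasP; exists (a :: w); first exact: IHt.
apply/allpairsP; exists (i.+1, y0); split.
- move: Hi; rewrite !mem_iota /= !add0n ltnS; exact.
- by rewrite mem_enum.
- by [].
Qed.

Lemma mem_tbl t (x y : seq 'I_q) : (y \in t_burst_list b t x) <-> E t x y.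
Proof.
split.
  elim: t y => [|t IHt] y; first by rewrite mem_seq1 => /eqP ->; exact: E0.
  rewrite mem_tbl_step => /hasP [w Hw /allpairsP [[i y0] [Hi _ ->]]].
  apply: ins_E; [exact: IHt | | exact: size_tuple].
  by move: Hi; rewrite mem_iota add0n ltnS.
elim=> {t x y}.
- exact: mem_head.
- move=> a t x y _; exact: cons_tbl.
- move=> t x y w sw _ Hy; rewrite mem_tbl_step; apply/hasP; exists y => //.
  have sw' : size w == b by rewrite sw.
  apply/allpairsP; exists (0, Tuple sw').
  split.
  + by [].
  + by rewrite mem_enum.
  + by rewrite /burst_ins /= take0 drop0.
Qed.


Lemma uniq_heads a : uniq (heads a).
Proof.
apply: allpairs_uniq; [exact: enum_uniq | exact: enum_uniq |].
by move=> [c1 w1] [c2 w2] _ _ /= [-> /val_inj ->].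
Qed.

Lemma uniq_L x t : uniq (L x t).
Proof.
elim: x t => [|a x IHx] t.
  rewrite /= map_inj_uniq ?enum_uniq //; exact: val_inj.
elim: t => [|t IHt]; rewrite L_cons cat_uniq map_inj_uniq ?IHx //; try by move=> ? ? [].
apply/and3P; split => //.
  apply/hasPn => z /allpairsP [[w y] /= [wh _ ->]]; apply/mapP => [[y' _]].
  move: wh; rewrite mem_heads => /andP [_].
  by case: w => [|c w'] /= hw; [rewrite eqxx in hw | move=> [ca]; rewrite ca eqxx in hw].
apply: allpairs_uniq; [exact: uniq_heads | exact: IHt |].
move=> [w1 y1] [w2 y2] /allpairsP [[w1' y1'] /= [h1 _ [-> ->]]]
  /allpairsP [[w2' y2'] /= [h2 _ [-> ->]]] /= /eqP.
move: h1 h2; rewrite !mem_heads => /andP [/eqP s1 _] /andP [/eqP s2 _].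
by rewrite eqseq_cat ?s1 ?s2 // => /andP [/eqP -> /eqP ->].
Qed.


Definition Sf n t := \sum_(i < t.+1) 'C(n + t, i) * (q - 1) ^ i.

Lemma Sf0 t : 0 < q -> Sf 0 t = q ^ t.
Proof.
move=> q0; rewrite /Sf -{2}(subnKC q0) expnDn add0n.
by apply: eq_bigr => i _; rewrite exp1n mul1n.
Qed.

Lemma Sfn0 n : Sf n 0 = 1.
Proof. by rewrite /Sf big_ord_recl big_ord0 bin0 addn0. Qed.

Lemma Sf_rec n t : Sf n.+1 t.+1 = Sf n t.+1 + (q - 1) * Sf n.+1 t.
Proof.
rewrite /Sf big_ord_recl [in X in _ = X + _]big_ord_recl !bin0.
rewrite !addSn !addnS add0n; congr _.+1.
rewrite (eq_bigr (fun i : 'I_t.+1 => 'C((n+t).+1, i.+1) * (q-1)^i.+1 + 'C((n+t).+1, i) * (q-1)^i.+1)); last first.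
  by move=> i _ /=; rewrite /bump leq0n add1n binS mulnDl.
rewrite big_split /=; congr (_ + _).
rewrite big_distrr /=; apply: eq_bigr => i _; rewrite expnS.
by rewrite mulnCA.
Qed.

Lemma size_allw m : size (allw m) = q ^ m.
Proof. by rewrite size_map -cardE card_tuple card_ord. Qed.

Lemma size_heads a : size (heads a) = (q - 1) * q ^ b.-1.
Proof. by rewrite size_allpairs -!cardE cardC1 card_tuple !card_ord subn1. Qed.

Lemma size_L x t : 0 < q -> size (L x t) = q ^ (t * b.-1) * Sf (size x) t.
Proof.
move=> q0; elim: x t => [|a x IHx] t.
  rewrite /= size_allw Sf0 // -expnD; congr (q ^ _).
  by rewrite -mulnSr prednK.
elim: t => [|t IHt]; rewrite L_cons size_cat size_map IHx.
  by rewrite !Sfn0.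
rewrite size_allpairs size_heads IHt /= Sf_rec mulnDr; congr (_ + _).
rewrite mulSn expnD !mulnA; congr (_ * _).
by rewrite -mulnA mulnC.
Qed.

End S.

Theorem theorem3p1 (n t q b : nat) :
  2 <= q -> 1 <= b ->
  (forall x : n.-tuple 'I_q,
     size (Iball b t (tval x)) =
       q ^ (t * (b - 1)) * \sum_(i < t.+1) 'C(n + t, i) * (q - 1) ^ i)
  /\ Imax q b n t = q ^ (t * (b - 1)) * \sum_(i < t.+1) 'C(n + t, i) * (q - 1) ^ i.
Proof.
move=> q2 b1.
have q0 : 0 < q by apply: leq_trans q2.
have key : forall x : n.-tuple 'I_q, size (Iball b t (tval x)) =
       q ^ (t * (b - 1)) * \sum_(i < t.+1) 'C(n + t, i) * (q - 1) ^ i.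
  move=> x; rewrite /Iball.
  have pe : perm_eq (undup (t_burst_list b t (tval x))) (@L q b x t).
    apply: uniq_perm; [exact: undup_uniq | exact: uniq_L |].
    move=> y; rewrite mem_undup; apply/idP/idP => H.
      by apply/(mem_L b1); apply/(mem_tbl b1).
    by apply/(mem_tbl b1); apply/(mem_L b1).
  by rewrite (perm_size pe) size_L // size_tuple subn1.
split => //.
rewrite /Imax; apply/eqP; rewrite eqn_leq; apply/andP; split.
  by apply/bigmax_leqP => x _; rewrite key.
rewrite -(key (nseq_tuple n (Ordinal q0))).
exact: leq_bigmax.
Qed.
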